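(* Let $K$ be a finite field of characteristic $2$, let $P=\begin{pmatrix}1&1\\0&1\end{pmatrix}$, $Q=\begin{pmatrix}1&0\\1&1\end{pmatrix}\in M_2(K)$, and define on $K\times K$ (column vectors) the operation $x\cdot y:=Q^{-1}x+Py$. Then $(K\times K,\cdot)$ is an indecomposable and irretractable cycle set, and for every $(x_1,x_2)^T\in K\times K$, $$\langle (x_1,x_2)^T\rangle=\begin{cases}\{(x_1,x_2)^T\} & \text{if } x_1=x_2,\\ \{(x_1,x_2)^T,(x_1,x_1)^T,(x_2,x_2)^T,(x_2,x_1)^T\} & \text{if } x_1\neq x_2.\end{cases}$$
   Context: A cycle set is a non-empty set $X$ with one operation $\cdot$ such that each $\sigma_x:y\mapsto x\cdot y$ is bijective and $(x\cdot y)\cdot(x\cdot z)=(y\cdot x)\cdot(y\cdot z)$ for all $x,y,z$. A sub-cycle set is a subset that is a cycle set under the restricted operation; $\langle x\rangle$ is the smallest sub-cycle set containing $x$. $X$ is indecomposable if it admits no partition into two nonempty sub-cycle sets (for finite $X$, equivalently the group generated by all $\sigma_x$ acts transitively). The retraction $\mathrm{Ret}(X)$ is the quotient of $X$ by $x\sim y\iff\sigma_x=\sigma_y$ with induced operation; a finite cycle set $X$ is irretractable if its absolute retraction $\mathrm{Ret}^m(X)$ ($m$ smallest with $\mathrm{Ret}^m(X)\cong\mathrm{Ret}^{m+1}(X)$) is isomorphic to $X$. *)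

(* Defs.v *)
From HB Require Import structures.
From mathcomp Require Import all_boot all_algebra all_field.
Set Implicit Arguments. Unset Strict Implicit. Unset Printing Implicit Defensive.
Import GRing.Theory.
Local Open Scope ring_scope.

Record magma := Magma { carrier :> finType; mop : carrier -> carrier -> carrier }.

Section CycleSets.
Variable X : magma.
Local Notation op := (@mop X).

Definition sigma (x : X) : {ffun X -> X} := [ffun y => op x y].

Definition is_cycle_set : Prop :=
  (forall x : X, bijective (op x)) /\
  (forall x y z : X, op (op x y) (op x z) = op (op y x) (op y z)).

(** S is a sub-cycle set: nonempty, closed under the operation, and each
    restricted sigma_x (x in S) is a bijection S -> S (the cycle set identity
    is inherited from X). *)
Definition sub_cycle_set (S : {set X}) : Prop :=
  [/\ S != set0,
      (forall x y, x \in S -> y \in S -> op x y \in S),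
      (forall x, x \in S -> {in S &, injective (op x)}) &
      (forall x z, x \in S -> z \in S -> exists2 y, y \in S & op x y = z)].

Definition generated (x : X) (S : {set X}) : Prop :=
  [/\ sub_cycle_set S, x \in S &
      forall T : {set X}, sub_cycle_set T -> x \in T -> S \subset T].

Definition indecomposable : Prop :=
  ~ exists A B : {set X}, [/\ sub_cycle_set A, sub_cycle_set B,
                              A :&: B = set0 & A :|: B = setT].
End CycleSets.

(** Retraction: quotient of X by x ~ y iff sigma_x = sigma_y, realised as the
    set of the sigma_x, with induced operation [x].[y] := [x.y]
    (computed through chosen representatives). *)
Definition ret_carrier (X : magma) : finType :=
  {f : {ffun X -> X} | f \in codom (@sigma X)}.

Definition ret_repr (X : magma) (a : ret_carrier X) : X := iinv (valP a).

Definition ret_op (X : magma) (a b : ret_carrier X) : ret_carrier X :=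
  exist _ (sigma (mop (ret_repr a) (ret_repr b))) (codom_f _ _).

Definition Ret (X : magma) : magma := Magma (@ret_op X).

Definition magma_iso (X Y : magma) : Prop :=
  exists f : X -> Y, bijective f /\
    forall x y : X, f (mop x y) = mop (f x) (f y).

(** Irretractable: the absolute retraction Ret^m(X) (m least with
    Ret^m(X) ~= Ret^(m+1)(X)) is isomorphic to X. *)
Definition irretractable (X : magma) : Prop :=
  exists m : nat,
    [/\ (forall k, (k < m)%N -> ~ magma_iso (iter k Ret X) (iter k.+1 Ret X)),
        magma_iso (iter m Ret X) (iter m.+1 Ret X) &
        magma_iso (iter m Ret X) X].

Definition matP (K : finFieldType) : 'M[K]_2 :=
  \matrix_(i, j) (if (i <= j)%N then 1 else 0).
Definition matQ (K : finFieldType) : 'M[K]_2 :=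
  \matrix_(i, j) (if (j <= i)%N then 1 else 0).
Definition col2 (K : finFieldType) (a b : K) : 'cV[K]_2 :=
  \col_(i < 2) (if i == ord0 then a else b).

Definition KMagma (K : finFieldType) : magma :=
  @Magma 'cV[K]_2 (fun x y => invmx (matQ K) *m x + matP K *m y).

(* Main.v *)
Require Import Defs.
From HB Require Import structures.
From mathcomp Require Import all_boot all_algebra all_field ring.
Local Open Scope ring_scope.
Import GRing.Theory.

Section S.
Variable K : finFieldType.
Hypothesis charK : 2%N \in [pchar K].

Lemma two0 : (2%:R : K) = 0.
Proof. exact: pcharf0 charK. Qed.

Lemma QQ : matQ K *m matQ K = 1%:M.
Proof.
apply/matrixP => i j; rewrite !mxE !big_ord_recr !big_ord0 /= ?mxE.
case: i => [[|[|//]] ?]; case: j => [[|[|//]] ?] /=; rewrite ?mulr1 ?mul1r ?mulr0 ?mul0r ?addr0 ?add0r //.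
exact: two0.
Qed.

Lemma PP : matP K *m matP K = 1%:M.
Proof.
apply/matrixP => i j; rewrite !mxE !big_ord_recr !big_ord0 /= ?mxE.
case: i => [[|[|//]] ?]; case: j => [[|[|//]] ?] /=; rewrite ?mulr1 ?mul1r ?mulr0 ?mul0r ?addr0 ?add0r //.
exact: two0.
Qed.

Lemma invQ : invmx (matQ K) = matQ K.
Proof.
have [uQ _] := mulmx1_unit QQ.
by rewrite -[RHS]mul1mx -(mulVmx uQ) -mulmxA QQ mulmx1.
Qed.

Lemma col2K (v : 'cV[K]_2) : v = col2 (v ord0 0) (v ord_max 0).
Proof.
apply/matrixP => i j; rewrite ord1 !mxE.
by case: i => [[|[|//]] ?] /=; congr (v _ _); apply: val_inj.
Qed.

Lemma col2E1 (a b : K) : col2 a b ord0 0 = a.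
Proof. by rewrite !mxE. Qed.
Lemma col2E2 (a b : K) : col2 a b ord_max 0 = b.
Proof. by rewrite !mxE. Qed.

Lemma col2_inj (a b c d : K) : col2 a b = col2 c d -> a = c /\ b = d.
Proof.
move=> h; split.
  by rewrite -(col2E1 a b) h col2E1.
by rewrite -(col2E2 a b) h col2E2.
Qed.

Lemma opE (a b c d : K) :
  @mop (KMagma K) (col2 a b) (col2 c d) = col2 (a + c + d) (a + b + d).
Proof.
rewrite /= invQ; apply/matrixP => i j; rewrite ord1 !mxE !big_ord_recr !big_ord0 /= ?mxE.
case: i => [[|[|//]] ?] /=; rewrite ?mxE /=; ring.
Qed.

Lemma ch2 (e1 e2 t : K) : e1 = e2 + 2%:R * t -> e1 = e2.
Proof. by move=> ->; rewrite two0 mul0r addr0. Qed.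

Local Notation X := (KMagma K).
Local Notation op := (@mop (KMagma K)).

Lemma op_inj (x : X) : injective (op x).
Proof.
move=> y1 y2 /= /addrI h.
by rewrite -[y1]mul1mx -[y2]mul1mx -PP -!mulmxA h.
Qed.

Lemma cycle_part : is_cycle_set X.
Proof.
split; first by move=> x; apply: injF_bij; apply: op_inj.
move=> x y z; rewrite (col2K x) (col2K y) (col2K z) !opE.
move: (x ord0 0) (x ord_max 0) (y ord0 0) (y ord_max 0) (z ord0 0) (z ord_max 0) => a b c d e f.
by congr col2; apply: (@ch2 _ _ (a - c)); ring.
Qed.

Lemma indec_part : indecomposable X.
Proof.
move=> [A [B [[A0 Acl _ _] [B0 Bcl Binj Bsurj] AB ABT]]].
have /set0Pn [a aA] := A0.
have /set0Pn [b bB] := B0.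
pose x : X := matQ K *m (b - matP K *m a).
have ex : op x a = b.
  by rewrite /= invQ mulmxA QQ mul1mx addrNK.
have : x \in A :|: B by rewrite ABT inE.
rewrite inE => /orP [xA|xB].
  have bA : b \in A by rewrite -ex; apply: Acl.
  have : b \in A :&: B by rewrite inE bA bB.
  by rewrite AB inE.
have [y yB ey] := Bsurj x b xB bB.
have ya : y = a by apply: (@op_inj x); rewrite ey ex.
have : a \in A :&: B by rewrite inE aA -ya yB.
by rewrite AB inE.
Qed.

Lemma sigma_inj : injective (@sigma X).
Proof.
move=> x y /ffunP /(_ 0) h.
rewrite !ffunE /= in h.
move/addIr: h; rewrite invQ => h.
by rewrite -[x]mul1mx -[y]mul1mx -QQ -!mulmxA h.
Qed.

Lemma irr_part : irretractable X.
Proof.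
exists 0%N; split => //.
  pose f (x : X) : Ret X := exist _ (sigma x) (codom_f (@sigma X) x).
  have rr x : ret_repr (f x) = x.
    apply: sigma_inj; rewrite /ret_repr.
    by rewrite (f_iinv (valP (f x))).
  exists f; split.
    exists (@ret_repr X) => // a.
    apply: val_inj => /=; rewrite /ret_repr.
    by rewrite (f_iinv (valP a)).
  move=> x y; apply: val_inj => /=.
  by rewrite !rr.
by exists id; split => //; exists id.
Qed.

Lemma col2_eq (a b c d : K) : (col2 a b == col2 c d) = (a == c) && (b == d).
Proof.
apply/eqP/andP => [/col2_inj [-> ->] //| [/eqP -> /eqP ->] //].
Qed.

Lemma sum3 (a b u v w : K) :
  (u == a) || (u == b) -> (v == a) || (v == b) -> (w == a) || (w == b) ->
  (u + v + w == a) || (u + v + w == b).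
Proof.
move=> /orP[/eqP->|/eqP->] /orP[/eqP->|/eqP->] /orP[/eqP->|/eqP->];
 first [apply/orP; left; apply/eqP; apply: (@ch2 _ _ (a)); ring
       | apply/orP; left; apply/eqP; apply: (@ch2 _ _ (b)); ring
       | apply/orP; right; apply/eqP; apply: (@ch2 _ _ (a)); ring
       | apply/orP; right; apply/eqP; apply: (@ch2 _ _ (b)); ring].
Qed.

Lemma gen_part (x1 x2 : K) :
  generated (X := KMagma K) (col2 x1 x2)
       (if x1 == x2 then [set col2 x1 x2]
        else [set col2 x1 x2; col2 x1 x1; col2 x2 x2; col2 x2 x1]).
Proof.
case: eqP => [<-|ne].
  split; last 2 first.
  - by rewrite inE.
  - by move=> T _ xT; apply/subsetP => z; rewrite inE => /eqP ->.
  split.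
  - by apply/set0Pn; exists (col2 x1 x1); rewrite inE.
  - move=> x y; rewrite !inE => /eqP -> /eqP ->; rewrite opE; apply/eqP.
    by congr col2; apply: (@ch2 _ _ (x1)); ring.
  - by move=> x _ y1 y2 _ _; apply: op_inj.
  - move=> x z; rewrite !inE => /eqP -> /eqP ->; exists (col2 x1 x1); rewrite ?inE //.
    by rewrite opE; congr col2; apply: (@ch2 _ _ (x1)); ring.
set S := [set _; _; _; _].
have memS u v : (col2 u v \in S) = ((u == x1) || (u == x2)) && ((v == x1) || (v == x2)).
  rewrite !inE !col2_eq.
  by case: (u == x1); case: (u == x2); case: (v == x1); case: (v == x2).
split; last 2 first.
- by rewrite !inE eqxx.
- move=> T [_ Tcl _ _] vT.
  have e1 : col2 x2 x1 = op (col2 x1 x2) (col2 x1 x2).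
    by rewrite opE; congr col2; [apply: (@ch2 _ _ (- x1)) | apply: (@ch2 _ _ (- x2))]; ring.
  have wT : col2 x2 x1 \in T by rewrite e1; apply: Tcl.
  have e2 : col2 x2 x2 = op (col2 x1 x2) (col2 x2 x1).
    by rewrite opE; congr col2; apply: (@ch2 _ _ (- x1)); ring.
  have e3 : col2 x1 x1 = op (col2 x2 x1) (col2 x1 x2).
    by rewrite opE; congr col2; apply: (@ch2 _ _ (- x2)); ring.
  apply/subsetP => z; rewrite !inE => /orP [/orP [/orP [/eqP->|/eqP->]|/eqP->]|/eqP->] //.
    by rewrite e3; apply: Tcl.
  by rewrite e2; apply: Tcl.
split.
- by apply/set0Pn; exists (col2 x1 x2); rewrite !inE eqxx.
- move=> x y; rewrite (col2K x) (col2K y) opE !memS => /andP[h1 h2] /andP[h3 h4].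
  by apply/andP; split; apply: sum3.
- by move=> x _ y1 y2 _ _; apply: op_inj.
- move=> x z; rewrite (col2K x) (col2K z) !memS => /andP[h1 h2] /andP[h3 h4].
  exists (col2 (z ord0 0 + z ord_max 0 + x ord_max 0) (z ord_max 0 + x ord0 0 + x ord_max 0)).
    by rewrite memS; apply/andP; split; apply: sum3.
  rewrite opE; congr col2.
    by apply: (@ch2 _ _ (x ord0 0 + z ord_max 0 + x ord_max 0)); ring.
  by apply: (@ch2 _ _ (x ord0 0 + x ord_max 0)); ring.
Qed.

End S.

Theorem mainTheorem9 (K : finFieldType) (charK : 2%N \in [pchar K]) :
  is_cycle_set (KMagma K) /\ indecomposable (KMagma K) /\
  irretractable (KMagma K) /\
  (forall x1 x2 : K,
     generated (X := KMagma K) (col2 x1 x2)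
       (if x1 == x2 then [set col2 x1 x2]
        else [set col2 x1 x2; col2 x1 x1; col2 x2 x2; col2 x2 x1])).
Proof.
split; first exact: cycle_part.
split; first exact: indec_part.
split; first exact: irr_part.
exact: gen_part.
Qed.
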